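(* Let $p$ be an odd prime with $p\equiv 1\pmod 8$. Then there exists a perfect $B[-1,3](p)$ set if and only if the multiplicative order $o(-\tfrac32)$ of $-3\cdot 2^{-1}\bmod p$ in $\mathbb{Z}_p^\ast$ is odd and $4$ divides the multiplicative order $o(2)$ of $2$ in $\mathbb{Z}_p^\ast$.
   Context: $\mathbb{Z}_p^\ast$ is the multiplicative group of nonzero residues modulo $p$, and $o(x)$ denotes the order of $x$ in this group. A set $B\subseteq\mathbb{Z}_p$ is a perfect $B[-1,3](p)$ set if every nonzero element of $\mathbb{Z}_p$ has a unique representation $ab \bmod p$ with $a\in\{-1,1,2,3\}$ and $b\in B$ (and $0$ has no such representation); equivalently $B\subseteq\mathbb{Z}_p^\ast$, $|B|=(p-1)/4$, and the sets $\{-b,b,2b,3b\}$, $b\in B$, partition $\mathbb{Z}_p^\ast$. *)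

(* Defs.v *)
From HB Require Import structures.
From mathcomp Require Import all_boot all_order all_algebra all_fingroup all_field.
Set Implicit Arguments. Unset Strict Implicit. Unset Printing Implicit Defensive.
Import GRing.Theory.
Local Open Scope ring_scope.

(* multiplicative order o(x) of x in the unit group F^* (0 if x is not a unit) *)
Definition mult_order (F : finFieldType) (x : F) : nat :=
  oapp (fun u : {unit F} => #[u]%g) 0%N (insub x).

Definition mults (F : finFieldType) : seq F := [:: -1; 1; 2%:R; 3%:R].

Definition perfect_B13 (F : finFieldType) (B : {set F}) : Prop :=
  (forall a b, a \in mults F -> b \in B -> a * b != 0) /\
  (forall x : F, x != 0 ->
     #|[set ab : F * F | [&& ab.1 \in mults F, ab.2 \in B & ab.1 * ab.2 == x]]| = 1%N).

(* Main.v *)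
Require Import Defs.
From HB Require Import structures.
From mathcomp Require Import all_boot all_order all_algebra all_fingroup all_field.
From mathcomp Require Import all_solvable zify ring.
Import GRing.Theory Num.Theory.

Section Setup.
Local Open Scope ring_scope.
Variable p : nat.
Hypothesis hp : prime p.
Hypothesis hp8 : (p %% 8 = 1)%N.
Local Notation F := 'F_p.
Local Notation n := p.-1.

Lemma p_ge17 : (17 <= p)%N.
Proof.
have E := divn_eq p 8; rewrite hp8 in E.
move: hp; rewrite E; case: (p %/ 8)%N => [|[|q]] //; lia.
Qed.

Lemma n_gt0 : (0 < n)%N.
Proof. have := p_ge17; lia. Qed.

Lemma cardF : #|F| = p.
Proof. exact: card_Fp. Qed.

Lemma expf_n (x : F) : x != 0 -> x ^+ n = 1.
Proof.
move=> x0; have := expf_card x.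
have -> : #|F| = n.+1 by rewrite cardF; have := p_ge17; lia.
rewrite exprS => h; apply: (mulfI x0); by rewrite h mulr1.
Qed.

Lemma exists_prim : exists g : F, n.-primitive_root g.
Proof.
pose rs := [seq x <- enum F | x != 0].
have: has n.-primitive_root rs.
  apply: has_prim_root; first exact: n_gt0.
  - apply/allP => x; rewrite mem_filter => /andP[x0 _].
    by rewrite unity_rootE expf_n.
  - by rewrite filter_uniq // enum_uniq.
  - have := cardC1 (0 : F); rewrite cardF => <-.
    apply: leq_trans (card_size rs); apply/eq_leq/eq_card => x.
    by rewrite /rs mem_filter mem_enum !inE andbT.
by case/hasP => g _ pg; exists g.
Qed.

Lemma natF_neq0 k : (0 < k < p)%N -> (k%:R : F) != 0.
Proof.
move=> /andP[k0 kp]; rewrite -(dvdn_pcharf (pchar_Fp hp)).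
by apply/negP => /(dvdn_leq k0); rewrite leqNgt kp.
Qed.

Lemma mults_uniq : uniq (mults F).
Proof.
have h k : (0 < k < 5)%N -> (k%:R : F) != 0.
  by move=> hk; apply: natF_neq0; have := p_ge17; lia.
rewrite /mults /= !inE !negb_or.
have hn k : (k.+1 < 5)%N -> (-1 : F) != k%:R.
  move=> hk; apply/negP => /eqP e; have := h k.+1 hk.
  by rewrite -natr1 -e addNr eqxx.
have hq i j : (0 < j - i)%N -> (j < 5)%N -> (i%:R : F) != j%:R.
  move=> hij hj; apply/negP => /eqP e; have := h (j - i)%N.
  rewrite natrB ?e ?subrr ?eqxx; last lia.
  by move=> /(_ _)/negP; apply; lia.
have e1 : (-1 : F) != 1 by exact: (hn 1%N).
have e2 : (-1 : F) != 2%:R by exact: (hn 2%N).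
have e3 : (-1 : F) != 3%:R by exact: (hn 3%N).
have e4 : (1 : F) != 2%:R by exact: (hq 1%N 2%N).
have e5 : (1 : F) != 3%:R by exact: (hq 1%N 3%N).
have e6 : (2%:R : F) != 3%:R by exact: (hq 2%N 3%N).
by rewrite e1 e2 e3 e4 e5 e6.
Qed.

Lemma char_sum (R : comNzRingType) (B : {set F}) (chi : F -> R) :
  perfect_B13 B -> (forall a b, a != 0 -> b != 0 -> chi (a * b) = chi a * chi b) ->
  (\sum_(a <- mults F) chi a) * (\sum_(b in B) chi b) = \sum_(x | x != 0) chi x.
Proof.
move=> [nz tile] chiM.
rewrite big_distrl /= big_uniq ?mults_uniq //=.
under eq_bigr do rewrite big_distrr /=.
rewrite pair_big /=.
rewrite (partition_big (fun ab : F * F => ab.1 * ab.2) (fun x => x != 0)); last first.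
  by move=> [a b] /andP[/= ha hb]; exact: nz.
apply: eq_bigr => x x0.
have := tile x x0; move/eqP/cards1P => [[a b] Sx].
have : (a, b) \in [set (a, b)] by rewrite set11.
rewrite -Sx inE /= => /and3P[ha hb /eqP hab].
rewrite (big_pred1 (a, b)) /=; last first.
  move/setP: Sx => Sx; move=> [a' b'] /=; have := Sx (a', b').
  by rewrite !inE /= andbA.
rewrite -hab chiM //.
  by apply: contraNneq (nz a b ha hb) => ->; rewrite mul0r.
by apply: contraNneq (nz a b ha hb) => ->; rewrite mulr0.
Qed.
End Setup.

Section Cyclo.
Local Open Scope ring_scope.

Lemma prim_half (j : nat) (z : algC) : (2 ^ j.+1)%N.-primitive_root z -> z ^+ (2 ^ j)%N = -1.
Proof.
move=> pz.
have h2 : (z ^+ (2 ^ j)%N) ^+ 2 == 1.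
  by rewrite -exprM mulnC -expnS (prim_expr_order pz).
have h1 : z ^+ (2 ^ j)%N != 1.
  rewrite -(prim_order_dvd pz); apply/negP => /(dvdn_leq (expn_gt0 2 j)).
  by rewrite expnS => h; have := expn_gt0 2 j; lia.
by move: h2; rewrite sqrf_eq1 (negbTE h1) /= => /eqP.
Qed.

Lemma div_Xk1 (P : {poly int}) j (z : algC) :
  (2 ^ j.+1)%N.-primitive_root z -> (map_poly intr P).[z] = 0 ->
  exists Q : {poly int}, P = Q * ('X^(2 ^ j)%N + 1).
Proof.
move=> pz Pz.
set K := (2 ^ j)%N.
have zK := @prim_half j z pz.
set d : {poly int} := 'X^K + 1%:P.
have mond : d \is monic by rewrite monicXnaddC // expn_gt0.
exists (P %/ d).
have E := Pdiv.IdomainMonic.divp_eq mond P.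
suff R0 : P %% d = 0 by rewrite {1}E R0 addr0.
apply/eqP; apply: contraT => R0.
have szd : size d = K.+1 by rewrite size_XnaddC // expn_gt0.
have szR : (size (P %% d)%R < K.+1)%N by rewrite -szd ltn_modpN0 // monic_neq0.
set R := (P %% d)%R in E R0 szR *.
have Rz : (map_poly intr R : {poly algC}).[z] = 0.
  have := Pz; rewrite {1}E rmorphD rmorphM /= hornerD hornerM.
  rewrite /d rmorphD /= map_polyXn map_polyC hornerD hornerXn hornerC zK addNr mulr0 add0r.
  by [].
have [q [Dq monq] dvq] := minCpolyP z.
have dR : (q %| map_poly intr R)%R.
  rewrite -dvq -map_poly_comp.
  have -> : map_poly (ratr \o intr) R = map_poly intr R :> {poly algC}.
    by apply: eq_map_poly => b /=; rewrite rmorph_int.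
  by rewrite /root Rz.
have szR' : size (map_poly (intr : int -> rat) R) = size R.
  by apply: size_map_inj_poly => //; exact: intr_inj.
have szq : size q = K.+1.
  have := size_cyclotomic z (2 ^ j.+1)%N.
  rewrite -(minCpoly_cyclotomic pz) Dq size_map_poly totient_pfactor // mul1n => ->.
  by [].
have nz : map_poly (intr : int -> rat) R != 0 by rewrite -size_poly_eq0 szR' size_poly_eq0.
have := dvdp_leq nz dR.
rewrite szq szR'; lia.
Qed.

Lemma level_neq (i k : nat) (z : algC) :
  (2 ^ k.+1)%N.-primitive_root z -> i != k -> z ^+ (2 ^ i)%N + 1 != 0.
Proof.
move=> pz ik; apply/negP; rewrite addr_eq0 => /eqP e.
have e2 : z ^+ (2 ^ i.+1)%N = 1 by rewrite expnS mulnC exprM e sqrrN expr1n.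
have e1 : z ^+ (2 ^ i)%N != 1.
  rewrite e; apply/negP => /eqP h.
  have : (2%:R : algC) == 0 by rewrite mulr2n -{1}h addNr.
  by rewrite pnatr_eq0.
have d2 : (2 ^ k.+1 %| 2 ^ i.+1)%N by rewrite (prim_order_dvd pz) e2.
have d1 : ~~ (2 ^ k.+1 %| 2 ^ i)%N by rewrite (prim_order_dvd pz).
rewrite !dvdn_Pexp2l // in d1 d2; move: ik d1 d2; lia.
Qed.

Lemma count_levels (S : seq nat) (z : nat -> algC) (P : {poly int}) :
  uniq S -> (forall i, i \in S -> (2 ^ i.+1)%N.-primitive_root (z i)) ->
  (forall i, i \in S -> (map_poly intr P : {poly algC}).[z i] = 0) ->
  exists c : int, P.[1] = c * 2 ^+ size S.
Proof.
elim: S P => [|i S IH] P /=; first by move=> _ _ _; exists P.[1]; rewrite mulr1.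
move=> /andP[iS uS] pr zr.
have [Q EQ] := @div_Xk1 P i (z i) (pr i (mem_head _ _)) (zr i (mem_head _ _)).
have [k kS|k kS|c Ec] := IH Q uS.
- by apply: pr; rewrite inE kS orbT.
- have := zr k; rewrite inE kS orbT => /(_ isT).
  rewrite EQ rmorphM /= hornerM => /eqP; rewrite mulf_eq0 => /orP[/eqP // |].
  rewrite rmorphD /= map_polyXn rmorph1 hornerD hornerXn hornerC.
  have := @level_neq i k (z k) (pr k _); rewrite inE kS orbT => /(_ isT).
  have ik : i != k by apply: contraNneq iS => ->.
  by move=> /(_ ik) /negbTE ->.
exists c; rewrite EQ hornerM Ec hornerD hornerXn expr1n hornerC exprS.
by rewrite -mulrA; congr (_ * _); rewrite mulrC.
Qed.

Lemma norm_unity (z : algC) k : (0 < k)%N -> z ^+ k = 1 -> `|z| = 1.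
Proof.
move=> k0 zk; apply/eqP; rewrite -(pexpr_eq1 k0 (normr_ge0 z)) -normrX zk normr1.
by [].
Qed.

Lemma two_plus (z1 z2 : algC) : `|z1| = 1 -> `|z2| = 1 -> 2%:R + z1 + z2 = 0 -> z1 = -1.
Proof.
move=> n1 n2 e.
have h1 : z1 * z1^* = 1 by rewrite -normCK n1 expr1n.
have ez2 : z2 = - (2%:R + z1) by apply: (addrI (2%:R + z1)); rewrite e subrr.
have h2 : (2%:R + z1) * (2%:R + z1^*) = 1.
  have := normCK z2; rewrite n2 expr1n ez2 rmorphN rmorphD /= conjC_nat.
  by move=> h; rewrite [RHS]h; ring.
have h3 : 2%:R * ((z1 + 1) * (z1^* + 1)) = 0.
  have -> : 2%:R * ((z1 + 1) * (z1^* + 1)) = z1 * z1^* + (2%:R + z1) * (2%:R + z1^*) - 2%:R by ring.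
  by rewrite h1 h2; ring.
move: h3 => /eqP; rewrite mulf_eq0 pnatr_eq0 /= mulf_eq0 !addr_eq0 => /orP[/eqP //|/eqP h].
by rewrite -[z1]conjCK h rmorphN /= rmorph1.
Qed.
End Cyclo.

Section Arith.

Lemma arithA (n m s e : nat) : n = (m * 2 ^ s)%N -> odd m -> (2 ^ s %| e)%N ->
  odd (n %/ gcdn e n).
Proof.
move=> En om de.
have m0 : (0 < m)%N by rewrite lt0n; apply: contraTneq om => ->.
have n0 : (0 < n)%N by rewrite En muln_gt0 expn_gt0 andbT.
have dd : (gcdn e n %| n)%N := dvdn_gcdr e n.
have Ed := divnK dd.
have /dvdnP[d' Ed'] : (2 ^ s %| gcdn e n)%N by rewrite dvdn_gcd de En dvdn_mull.
apply: contraT => ev.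
have /dvdnP[q' Eq] : (2 %| n %/ gcdn e n)%N by rewrite dvdn2.
move: Ed; rewrite Eq Ed' En => E.
have P0 := expn_gt0 2 s.
have : m = (2 * (q' * d'))%N.
  apply/eqP; rewrite -(eqn_pmul2r P0) -E; apply/eqP; ring.
by move=> em; move: om; rewrite em oddM.
Qed.

Lemma arithB (n m s a : nat) : n = (m * 2 ^ s)%N -> odd m -> (1 <= s)%N ->
  ~~ (2 ^ s.-1 %| a)%N -> (4 %| n %/ gcdn a n)%N.
Proof.
move=> En om s1 na.
have m0 : (0 < m)%N by rewrite lt0n; apply: contraTneq om => ->.
have n0 : (0 < n)%N by rewrite En muln_gt0 expn_gt0 andbT.
have dd : (gcdn a n %| n)%N := dvdn_gcdr a n.
have Ed := divnK dd.
have d0 : (0 < gcdn a n)%N by rewrite gcdn_gt0 n0 orbT.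
have q0 : (0 < n %/ gcdn a n)%N by rewrite divn_gt0 // dvdn_leq.
apply: contraR na => n4.
apply: (dvdn_trans _ (dvdn_gcdl a n)).
have ln : logn 2 n = s.
  by rewrite En lognM ?expn_gt0 // logn_coprime ?coprime2n // pfactorK.
have lq : (logn 2 (n %/ gcdn a n) < 2)%N.
  by rewrite ltnNge -pfactor_dvdn.
rewrite pfactor_dvdn //.
have := congr1 (logn 2) Ed; rewrite lognM // ln; lia.
Qed.


Lemma odd_divD k c i j : (i <= j)%N ->
  odd ((k + c * 2 ^ j) %/ 2 ^ i) = odd (k %/ 2 ^ i) (+) (odd c && (i == j)).
Proof.
move=> ij.
have -> : (c * 2 ^ j = (c * 2 ^ (j - i)) * 2 ^ i)%N by rewrite -mulnA -expnD subnK.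
rewrite divnDMl ?expn_gt0 // oddD oddM oddX orbF.
by congr (_ (+) (_ && _)); apply/eqP/eqP; lia.
Qed.

Lemma arithC (n m s e : nat) : n = (m * 2 ^ s)%N -> odd m ->
  odd (n %/ gcdn e n) -> (2 ^ s %| e)%N.
Proof.
move=> En om oq.
have m0 : (0 < m)%N by rewrite lt0n; apply: contraTneq om => ->.
have n0 : (0 < n)%N by rewrite En muln_gt0 expn_gt0 andbT.
have dd : (gcdn e n %| n)%N := dvdn_gcdr e n.
have Ed := divnK dd.
have d0 : (0 < gcdn e n)%N by rewrite gcdn_gt0 n0 orbT.
have q0 : (0 < n %/ gcdn e n)%N by rewrite divn_gt0 // dvdn_leq.
apply: (dvdn_trans _ (dvdn_gcdl e n)).
have ln : logn 2 n = s.
  by rewrite En lognM ?expn_gt0 // logn_coprime ?coprime2n // pfactorK.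
have lq : logn 2 (n %/ gcdn e n) = 0%N by rewrite logn_coprime // coprime2n.
rewrite pfactor_dvdn //.
have := congr1 (logn 2) Ed; rewrite lognM // ln lq; lia.
Qed.

Lemma arithD (n m s a : nat) : n = (m * 2 ^ s)%N -> odd m -> (1 <= s)%N ->
  (4 %| n %/ gcdn a n)%N -> ~~ (2 ^ s.-1 %| a)%N.
Proof.
move=> En om s1 h4; apply/negP => da.
have m0 : (0 < m)%N by rewrite lt0n; apply: contraTneq om => ->.
have n0 : (0 < n)%N by rewrite En muln_gt0 expn_gt0 andbT.
have dd : (gcdn a n %| n)%N := dvdn_gcdr a n.
have Ed := divnK dd.
have d0 : (0 < gcdn a n)%N by rewrite gcdn_gt0 n0 orbT.
have q0 : (0 < n %/ gcdn a n)%N by rewrite divn_gt0 // dvdn_leq.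
have ln : logn 2 n = s.
  by rewrite En lognM ?expn_gt0 // logn_coprime ?coprime2n // pfactorK.
have lq : (2 <= logn 2 (n %/ gcdn a n))%N by rewrite -pfactor_dvdn.
have ld : (s.-1 <= logn 2 (gcdn a n))%N.
  rewrite -pfactor_dvdn // dvdn_gcd da En; apply: dvdn_mull; rewrite dvdn_exp2l //; lia.
have := congr1 (logn 2) Ed; rewrite lognM // ln; lia.
Qed.
End Arith.

Section WithG.
Local Open Scope ring_scope.
Variable p : nat.
Hypothesis hp : prime p.
Hypothesis hp8 : (p %% 8 = 1)%N.
Local Notation F := 'F_p.
Local Notation n := p.-1.
Variable g : F.
Hypothesis pg : n.-primitive_root g.

Definition logg (x : F) := find (fun k => g ^+ k == x) (iota 0 n).

Lemma loggP x : x != 0 -> (logg x < n)%N /\ g ^+ logg x = x.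
Proof.
move=> x0; have [i ->] := prim_rootP pg (expf_n p hp hp8 _ x0).
have hh : has (fun k => g ^+ k == g ^+ i) (iota 0 n).
  by apply/hasP; exists (val i); rewrite ?mem_iota //= add0n ltn_ord.
have := hh; rewrite has_find size_iota => lt; split => //.
by have := nth_find 0 hh; rewrite nth_iota // add0n => /eqP.
Qed.

Lemma g_neq0 : g != 0.
Proof. by rewrite (prim_root_eq0 pg) -lt0n (n_gt0 p hp hp8). Qed.

Lemma gX_neq0 k : g ^+ k != 0.
Proof. by rewrite expf_neq0 // g_neq0. Qed.

Lemma logg_exp k : logg (g ^+ k) = (k %% n)%N.
Proof.
have [lt e] := loggP _ (gX_neq0 k).
have /eqP := e; rewrite (eq_prim_root_expr pg) => /eqP.
by rewrite modn_small.
Qed.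

Lemma logg_mul x y : x != 0 -> y != 0 -> logg (x * y) = ((logg x + logg y) %% n)%N.
Proof.
move=> x0 y0; have [_ ex] := loggP _ x0; have [_ ey] := loggP _ y0.
by rewrite -{1}ex -{1}ey -exprD logg_exp.
Qed.

Lemma mult_order_prim (x : F) d : d.-primitive_root x -> mult_order x = d.
Proof.
move=> px; have d0 := prim_order_gt0 px.
have x0 : x != 0 by rewrite (prim_root_eq0 px) -lt0n.
rewrite /mult_order; case: insubP => [u _ ux /= | ]; last by rewrite unitfE x0.
apply/eqP; rewrite eqn_dvd; apply/andP; split.
  rewrite order_dvdn -val_eqE /= FinRing.val_unitX ux.
  by rewrite -(prim_order_dvd px).
by rewrite (prim_order_dvd px) -ux -FinRing.val_unitX -[1]/(val (1%g : {unit F})) val_eqE -order_dvdn.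
Qed.

Lemma mult_order_exp k : mult_order (g ^+ k) = (n %/ gcdn k n)%N.
Proof. exact/mult_order_prim/exp_prim_root. Qed.


Definition s2 := logn 2 n.
Definition m2 := (n %/ 2 ^ s2)%N.
Definition half := (m2 * 2 ^ s2.-1)%N.

Lemma n_eq : n = (m2 * 2 ^ s2)%N.
Proof. by rewrite /m2 divnK // pfactor_dvdnn. Qed.

Lemma s2_ge3 : (3 <= s2)%N.
Proof.
rewrite /s2 -pfactor_dvdn ?(n_gt0 p hp hp8) //.
have E := divn_eq p 8; rewrite hp8 in E.
by rewrite E addn1 /= dvdn_mull.
Qed.

Lemma m2_odd : odd m2.
Proof.
apply: contraT => ev.
have : (2 ^ s2.+1 %| n)%N.
  rewrite n_eq expnS [(2 * _)%N]mulnC [(m2 * _)%N]mulnC dvdn_pmul2l ?expn_gt0 //.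
  by rewrite dvdn2.
by rewrite pfactor_dvdn ?(n_gt0 p hp hp8) // /s2 ltnn.
Qed.

Lemma m2_gt0 : (0 < m2)%N.
Proof. by have := m2_odd; case: m2. Qed.

Lemma n_half : n = (2 * half)%N.
Proof.
have := s2_ge3; rewrite /half n_eq; case: s2 => // k _.
by rewrite expnS /=; lia.
Qed.

Lemma half_lt : (0 < half < n)%N.
Proof.
have := n_half; have := n_gt0 p hp hp8; lia.
Qed.

Lemma gneg1 : g ^+ half = -1.
Proof.
have h2 : (g ^+ half) ^+ 2 == 1 by rewrite -exprM mulnC -n_half (prim_expr_order pg).
have h1 : g ^+ half != 1.
  rewrite -(prim_order_dvd pg); apply/negP => /(dvdn_leq _).
  by have := half_lt; lia.
by move: h2; rewrite sqrf_eq1 (negbTE h1) /= => /eqP.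
Qed.

Lemma logg_neg1 : logg (-1) = half.
Proof. by rewrite -gneg1 logg_exp modn_small //; have := half_lt; lia. Qed.

Lemma logg1 : logg 1 = 0%N.
Proof. by rewrite -(expr0 g) logg_exp mod0n. Qed.


Section Nec.
Variable B : {set F}.
Hypothesis hB : perfect_B13 B.

Lemma cardB : (4 * #|B|)%N = n.
Proof.
have := @char_sum p hp hp8 int B (fun _ => 1) hB (fun a b _ _ => esym (mulr1 1)).
rewrite /mults !big_cons big_nil sumr_const.
rewrite (eq_bigl (mem (predC1 (0:F)))) // sumr_const cardC1 card_Fp //.
have -> : (1 + (1 + (1 + (1 + 0))) : int) = 4%:R by [].
by rewrite -natrM => /eqP; rewrite eqr_nat => /eqP.
Qed.


Variable zeta : algC.
Hypothesis pz : (2 ^ s2)%N.-primitive_root zeta.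

Definition zj j := zeta ^+ (2 ^ s2 %/ 2 ^ j.+1)%N.
Definition chi j (x : F) := zj j ^+ logg x.

Lemma zj_prim j : (j < s2)%N -> (2 ^ j.+1)%N.-primitive_root (zj j).
Proof. by move=> js; exact: (dvdn_prim_root pz (dvdn_exp2l 2 js)). Qed.

Lemma zj_n j : (j < s2)%N -> zj j ^+ n = 1.
Proof.
move=> js; apply/eqP; rewrite -(prim_order_dvd (zj_prim _ js)) n_eq.
by apply: dvdn_mull; rewrite dvdn_exp2l.
Qed.

Lemma chiM j : (j < s2)%N -> forall a b, a != 0 -> b != 0 -> chi j (a * b) = chi j a * chi j b.
Proof. by move=> js a b a0 b0; rewrite /chi logg_mul // expr_mod ?(zj_n _ js) // exprD. Qed.

Lemma logg_g : logg g = 1%N.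
Proof. by rewrite -{1}(expr1 g) logg_exp modn_small //; have := half_lt; lia. Qed.

Lemma chi_sum0 j : (j < s2)%N -> \sum_(x | x != 0) chi j x = 0.
Proof.
move=> js; set S := \sum_(x | x != 0) chi j x.
have ES : S = zj j * S.
  rewrite {1}/S (reindex_inj (mulfI g_neq0)) /=.
  rewrite (eq_bigl (fun x => x != 0)); last by move=> x; rewrite mulf_eq0 negb_or g_neq0.
  rewrite /S big_distrr /=; apply: eq_bigr => x x0.
  by rewrite chiM // ?g_neq0 // /chi logg_g expr1.
have z1 : zj j != 1.
  rewrite -[zj j]expr1 -(prim_order_dvd (zj_prim _ js)); apply/negP => /(dvdn_leq (ltn0Sn 0)).
  by rewrite expnS; have := expn_gt0 2 j; lia.
apply/eqP; move: ES => /eqP; rewrite -subr_eq0 -{1}[S]mul1r -mulrBl mulf_eq0.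
by rewrite subr_eq0 eq_sym (negbTE z1).
Qed.

Lemma prod0 j : (j < s2)%N ->
  (\sum_(a <- mults F) chi j a) * (\sum_(b in B) chi j b) = 0.
Proof. by move=> js; rewrite char_sum // ?chi_sum0 //; exact: chiM. Qed.

Lemma Msum_eq j : \sum_(a <- mults F) chi j a =
  zj j ^+ half + (1 + (zj j ^+ logg 2%:R + zj j ^+ logg 3%:R)).
Proof. by rewrite /mults !big_cons big_nil addr0 /chi logg_neg1 logg1 expr0. Qed.

Definition Fpoly : {poly int} := \sum_(b in B) 'X^(logg b).

Lemma Fpoly_eval (z : algC) : (map_poly intr Fpoly : {poly algC}).[z] = \sum_(b in B) z ^+ logg b.
Proof.
rewrite /Fpoly rmorph_sum horner_sum; apply: eq_bigr => b _.
by rewrite /= map_polyXn hornerXn.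
Qed.

Lemma Fpoly1 : Fpoly.[1] = #|B|%:R.
Proof.
rewrite /Fpoly horner_sum (eq_bigr (fun _ => 1)) ?sumr_const //.
by move=> b _; rewrite hornerXn expr1n.
Qed.


Definition Sz := [seq j <- iota 0 s2 | \sum_(b in B) chi j b == 0].

Lemma fewS : (size Sz <= s2 - 2)%N.
Proof.
have uS : uniq Sz by rewrite filter_uniq // iota_uniq.
have primS : forall j, j \in Sz -> (2 ^ j.+1)%N.-primitive_root (zj j).
  by move=> j; rewrite mem_filter mem_iota add0n => /andP[_ js]; exact: zj_prim.
have rootS : forall j, j \in Sz -> (map_poly intr Fpoly : {poly algC}).[zj j] = 0.
  by move=> j; rewrite mem_filter => /andP[/eqP h _]; rewrite Fpoly_eval.
have [c Ec] := count_levels _ _ _ uS primS rootS.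
rewrite Fpoly1 in Ec.
rewrite leqNgt; apply/negP => big.
have d : (2 ^ (s2.-1) %| #|B|)%N.
  have : ((2 ^+ s2.-1 : int) %| #|B|%:R)%Z.
    rewrite Ec; apply: dvdz_mull; apply: dvdz_exp2l; have := s2_ge3; lia.
  rewrite dvdzE abszX; move=> h; have e : (`|(#|B|%:R : int)|)%N = #|B| by rewrite natz.
  by rewrite e in h.
case/dvdnP: d => t Et.
have c4 := cardB; rewrite n_eq Et in c4.
have e2 : (2 ^ s2 = 2 * 2 ^ s2.-1)%N by have := s2_ge3; case: s2 => // k _; rewrite expnS.
rewrite e2 in c4.
have P0 := expn_gt0 2 s2.-1.
have : m2 = (2 * t)%N by nia.
by move=> em; have := m2_odd; rewrite em oddM.
Qed.

Definition Tz := [seq j <- iota 0 s2 | \sum_(a <- mults F) chi j a == 0].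

Lemma bigT : (2 <= size Tz)%N.
Proof.
have := fewS; rewrite /Sz /Tz !size_filter.
have E := count_predUI (fun j => \sum_(b in B) chi j b == 0)
  (fun j => \sum_(a <- mults F) chi j a == 0) (iota 0 s2).
have U : count (predU (fun j => \sum_(b in B) chi j b == 0)
  (fun j => \sum_(a <- mults F) chi j a == 0)) (iota 0 s2) = s2.
  rewrite -[RHS](size_iota 0) -count_predT; apply: eq_in_count => j.
  rewrite mem_iota add0n /= => js.
  by have := prod0 _ js; move/eqP; rewrite mulf_eq0 orbC.
have := count_size (predI (fun j => \sum_(b in B) chi j b == 0)
  (fun j => \sum_(a <- mults F) chi j a == 0)) (iota 0 s2).
rewrite size_iota; have := s2_ge3; lia.
Qed.

Lemma zj_unit j k : (j < s2)%N -> `|zj j ^+ k| = 1.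
Proof.
move=> js; apply: (norm_unity _ (2 ^ j.+1)%N); first by rewrite expn_gt0.
by rewrite -exprM mulnC exprM (prim_expr_order (zj_prim _ js)) expr1n.
Qed.

Lemma level_lt j : j \in Tz -> (j < s2.-1)%N -> zj j ^+ logg 2%:R = -1.
Proof.
rewrite mem_filter mem_iota add0n => /andP[/eqP h js] jl.
have js' : (j < s2)%N by lia.
have zh : zj j ^+ half = 1.
  apply/eqP; rewrite -(prim_order_dvd (zj_prim _ js')) /half.
  by apply: dvdn_mull; rewrite dvdn_exp2l.
move: h; rewrite Msum_eq zh addrA.
have -> : (1 + 1 : algC) = 2%:R by [].
rewrite addrA; apply: two_plus; exact: zj_unit.
Qed.

Lemma val_level j : (j < s2)%N -> zj j ^+ logg 2%:R = -1 ->
  (2 ^ j %| logg 2%:R)%N && ~~ (2 ^ j.+1 %| logg 2%:R)%N.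
Proof.
move=> js e; apply/andP; split.
  have : (2 ^ j.+1 %| logg 2%:R * 2)%N.
    by rewrite (prim_order_dvd (zj_prim _ js)) exprM e sqrrN expr1n.
  by rewrite expnSr dvdn_pmul2r.
rewrite (prim_order_dvd (zj_prim _ js)) e; apply/negP => /eqP h.
have : (2%:R : algC) == 0 by rewrite mulr2n -{1}h addNr.
by rewrite pnatr_eq0.
Qed.

Lemma zj_top : zj s2.-1 = zeta.
Proof.
rewrite /zj prednK; last by have := s2_ge3; lia.
by rewrite divnn expn_gt0 expr1.
Qed.

Lemma level_top : s2.-1 \in Tz ->
  (2 ^ s2 %| half + logg 3%:R + (n - logg 2%:R))%N.
Proof.
rewrite mem_filter => /andP[/eqP h _].
have s1 : s2 = s2.-1.+1 by have := s2_ge3; lia.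
have zh : zeta ^+ half = -1.
  rewrite /half mulnC exprM.
  have pz' : (2 ^ s2.-1.+1)%N.-primitive_root zeta by rewrite -s1.
  by rewrite (@prim_half s2.-1 zeta pz') -signr_odd m2_odd expr1.
move: h; rewrite Msum_eq zj_top zh addrA addNr add0r => /eqP.
rewrite addrC addr_eq0 => /eqP e3.
rewrite (prim_order_dvd pz) !exprD zh e3 mulN1r opprK -exprD.
have two0 : (2%:R : F) != 0 by apply: natF_neq0; have := p_ge17 p hp hp8; lia.
have a2 := (loggP _ two0).1.
rewrite subnKC; last by lia.
by rewrite -(prim_order_dvd pz) n_eq dvdn_mull.
Qed.


Lemma nec : odd (mult_order (- 3%:R / 2%:R : F)) /\ (4 %| mult_order (2%:R : F))%N.
Proof.
have two0 : (2%:R : F) != 0 by apply: natF_neq0; have := p_ge17 p hp hp8; lia.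
have [a2 ga] := loggP _ two0.
have he : g ^+ (half + logg 3%:R + (n - logg 2%:R)) = - 3%:R / 2%:R.
  have h2 : g ^+ (n - logg 2%:R) = 2%:R^-1.
    apply: (mulIf two0); rewrite mulVf // -[X in _ * X = _]ga -exprD subnK; last by lia.
    by rewrite (prim_expr_order pg).
  have three0 : (3%:R : F) != 0 by apply: natF_neq0; have := p_ge17 p hp hp8; lia.
  have [_ g3] := loggP _ three0.
  by rewrite !exprD gneg1 g3 h2 mulN1r.
rewrite -he -{2}ga !mult_order_exp.
have uT : uniq Tz by rewrite filter_uniq // iota_uniq.
have inT j : j \in Tz -> (j < s2)%N by rewrite mem_filter mem_iota add0n => /andP[_].
have key a b : a \in Tz -> b \in Tz -> (a < s2.-1)%N -> (b < s2.-1)%N -> a = b.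
  move=> aT bT al bl.
  have /andP[da na] := val_level _ (inT _ aT) (level_lt _ aT al).
  have /andP[db nb] := val_level _ (inT _ bT) (level_lt _ bT bl).
  case: (ltngtP a b) => // ab; exfalso.
    by move/negP: na; apply; apply: dvdn_trans db; rewrite dvdn_exp2l.
  by move/negP: nb; apply; apply: dvdn_trans da; rewrite dvdn_exp2l.
have [top [j [jT jl]]] : s2.-1 \in Tz /\ exists j, j \in Tz /\ (j < s2.-1)%N.
  have := bigT; have := uT; have := inT; have := key.
  case: Tz => [|j1 [|j2 r]] //= key' inT' /andP[] ; rewrite inE negb_or => /andP[j12 _] _ _.
  have j1T : j1 \in [:: j1, j2 & r] by rewrite mem_head.
  have j2T : j2 \in [:: j1, j2 & r] by rewrite !inE eqxx orbT.
  have l1 := inT' _ j1T; have l2 := inT' _ j2T.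
  case: (ltnP j1 s2.-1) => h1; case: (ltnP j2 s2.-1) => h2.
  - by move/eqP: j12; case; apply: key'.
  - split; last by exists j1.
    by have -> : s2.-1 = j2 by lia.
  - split; last by exists j2.
    by have -> : s2.-1 = j1 by lia.
  - by move/eqP: j12; case; lia.
split.
  exact: (arithA _ _ _ _ n_eq m2_odd (level_top top)).
apply: (arithB _ _ _ _ n_eq m2_odd); first by have := s2_ge3; lia.
have /andP[_ nj] := val_level _ (inT _ jT) (level_lt _ jT jl).
apply: contra nj; apply: dvdn_trans; rewrite dvdn_exp2l //.
Qed.
End Nec.

Lemma two_neq0 : (2%:R : F) != 0.
Proof. by apply: natF_neq0; have := p_ge17 p hp hp8; lia. Qed.
Lemma three_neq0 : (3%:R : F) != 0.
Proof. by apply: natF_neq0; have := p_ge17 p hp hp8; lia. Qed.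

Lemma ginv2 : g ^+ (n - logg 2%:R) = 2%:R^-1.
Proof.
have [a2 ga] := loggP _ two_neq0.
apply: (mulIf two_neq0); rewrite mulVf ?two_neq0 // -[X in _ * X = _]ga -exprD subnK; last by lia.
by rewrite (prim_expr_order pg).
Qed.

Lemma he_lem : g ^+ (half + logg 3%:R + (n - logg 2%:R)) = - 3%:R / 2%:R.
Proof.
have [_ g3] := loggP _ three_neq0.
by rewrite !exprD gneg1 g3 ginv2 mulN1r.
Qed.

Section Suf.
Hypothesis oh : odd (mult_order (- 3%:R / 2%:R : F)).
Hypothesis o2 : (4 %| mult_order (2%:R : F))%N.

Definition al := logg 2%:R.
Definition ee := (half + logg 3%:R + (n - al))%N.

Lemma e2s : (2 ^ s2 %| ee)%N.
Proof.
move: oh; rewrite -he_lem mult_order_exp => h.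
exact: (arithC _ _ _ _ n_eq m2_odd h).
Qed.

Lemma nal : ~~ (2 ^ s2.-1 %| al)%N.
Proof.
have [_ ga] := loggP _ two_neq0.
move: o2; rewrite -ga mult_order_exp => h.
by apply: (arithD _ _ _ _ n_eq m2_odd _ h); have := s2_ge3; lia.
Qed.

Lemma al_pos : (0 < al)%N.
Proof.
rewrite lt0n; apply/negP => /eqP a0.
have [_ ga] := loggP _ two_neq0.
move: ga; rewrite -/al a0 expr0 => e.
have : ((2 - 1)%:R : F) == 0 by rewrite natrB // -e subrr.
by rewrite oner_eq0.
Qed.

Definition vv := logn 2 al.
Definition ww := (al %/ 2 ^ vv)%N.

Lemma al_eq : al = (ww * 2 ^ vv)%N.
Proof. by rewrite /ww divnK // pfactor_dvdnn. Qed.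

Lemma ww_odd : odd ww.
Proof.
apply: contraT => ev.
have : (2 ^ vv.+1 %| al)%N.
  rewrite al_eq expnS dvdn_pmul2r ?expn_gt0 //.
  by rewrite dvdn2.
by rewrite pfactor_dvdn ?al_pos // /vv ltnn.
Qed.

Lemma vv_lt : (vv < s2.-1)%N.
Proof.
rewrite ltnNge; apply/negP => h; move/negP: nal; apply.
by apply: dvdn_trans (pfactor_dvdnn 2 al); rewrite dvdn_exp2l.
Qed.

Definition bc k := ~~ odd (k %/ 2 ^ vv) && ~~ odd (k %/ 2 ^ s2.-1).

Lemma s2pos : (s2.-1 < s2)%N.
Proof. by have := s2_ge3; lia. Qed.

Lemma bc_add2s k d : (2 ^ s2 %| d)%N -> bc (k + d) = bc k.
Proof.
case/dvdnP => c ->; rewrite /bc !odd_divD ?(ltnW s2pos) //; last first.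
  by apply: leq_trans (ltnW vv_lt) (ltnW s2pos).
have -> : (s2.-1 == s2) = false by have := s2pos; lia.
have -> : (vv == s2) = false by have := vv_lt; have := s2pos; lia.
by rewrite !andbF !addbF.
Qed.

Lemma bc_mod k : bc k = bc (k %% n).
Proof.
rewrite {1}(divn_eq k n) addnC n_eq mulnA bc_add2s //.
exact: dvdn_mull.
Qed.

Lemma bc_cong k1 k2 : k1 = k2 %[mod n] -> bc k1 = bc k2.
Proof. by move=> e; rewrite bc_mod e -bc_mod. Qed.

Lemma bc_gX x k : x != 0 -> bc (logg (x * g ^+ k)) = bc (logg x + k).
Proof.
move=> x0; rewrite logg_mul ?gX_neq0 // logg_exp; apply: bc_cong.
by rewrite modn_mod modnDmr.
Qed.

Definition Bset : {set F} := [set x : F | (x != 0) && bc (logg x)].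


Lemma nmal : exists w', (n - al)%N = (w' * 2 ^ vv)%N /\ odd w'.
Proof.
have vs : (vv <= s2)%N by have := vv_lt; have := s2pos; lia.
have En : n = (m2 * 2 ^ (s2 - vv) * 2 ^ vv)%N by rewrite -mulnA -expnD subnK // -n_eq.
have [alt _] := loggP _ two_neq0.
exists (m2 * 2 ^ (s2 - vv) - ww)%N; split.
  by rewrite mulnBl -al_eq -En.
have le : (ww <= m2 * 2 ^ (s2 - vv))%N.
  by rewrite -(leq_pmul2r (expn_gt0 2 vv)) -al_eq -En ltnW.
rewrite oddB // oddM oddX ww_odd.
have -> : (s2 - vv == 0)%N = false by have := vv_lt; have := s2pos; lia.
by rewrite andbF.
Qed.

Lemma Ah k : odd ((k + half) %/ 2 ^ vv) = odd (k %/ 2 ^ vv).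
Proof.
have h1 : (vv <= s2.-1)%N by have := vv_lt; lia.
have h2 : (vv == s2.-1) = false by have := vv_lt; lia.
by rewrite /half odd_divD // h2 andbF addbF.
Qed.

Lemma Th k : odd ((k + half) %/ 2 ^ s2.-1) = ~~ odd (k %/ 2 ^ s2.-1).
Proof. by rewrite /half odd_divD // m2_odd eqxx addbT. Qed.

Lemma Aa k : odd ((k + (n - al)) %/ 2 ^ vv) = ~~ odd (k %/ 2 ^ vv).
Proof. have [w' [Ew ow]] := nmal. by rewrite Ew odd_divD // ow eqxx addbT. Qed.

Lemma Bset_perfect : perfect_B13 Bset.
Proof.
have a_neq0 a : a \in mults F -> a != 0.
  rewrite !inE => /or4P[] /eqP ->; rewrite ?oppr_eq0 ?oner_eq0 ?two_neq0 ?three_neq0 //.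
split.
  move=> a b am; rewrite inE => /andP[b0 _]; by rewrite mulf_neq0 // a_neq0.
move=> x x0.
set z := logg x.
pose Qf a := x * a^-1 \in Bset.
have QE a : a != 0 -> Qf a = bc (logg (x * a^-1)).
  by move=> a0; rewrite /Qf inE mulf_neq0 ?invr_eq0.
have Qm : Qf (-1) = bc (z + half).
  by rewrite QE ?oppr_eq0 ?oner_eq0 // invrN1 -gneg1 bc_gX.
have Q1 : Qf 1 = bc z by rewrite QE ?oner_eq0 // invr1 mulr1.
have Q2 : Qf 2%:R = bc (z + (n - al)).
  by rewrite QE ?two_neq0 // -ginv2 bc_gX.
have Q3 : Qf 3%:R = bc (z + (n - al) + half).
  have y0 : x * 3%:R^-1 != 0 by rewrite mulf_neq0 ?invr_eq0 ?three_neq0.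
  have E3 : x * 3%:R^-1 * g ^+ ee = x * g ^+ (half + (n - al)).
    rewrite /ee he_lem exprD gneg1 ginv2 -!mulrA [3%:R^-1 * _]mulrA mulrN mulVf ?three_neq0 //.
  rewrite QE ?three_neq0 // -(bc_add2s _ _ e2s) -bc_gX // E3 bc_gX //.
  by rewrite -/z addnA [(z + half)%N]addnC -addnA [(half + _)%N]addnC.
rewrite /bc Ah Th negbK in Qm.
rewrite /bc Aa in Q2.
rewrite /bc Ah Th negbK Aa negbK in Q3.
rewrite /bc in Q1.
have [a0 [a0m [Qa0 un]]] : exists a0, a0 \in mults F /\ Qf a0 /\
    forall a, a \in mults F -> Qf a -> a = a0.
{ case Az: (odd (z %/ 2 ^ vv)); case Tz: (odd (z %/ 2 ^ s2.-1));
    case T': (odd ((z + (n - al)) %/ 2 ^ s2.-1)).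
  all: [> exists 3%:R | exists 2%:R | exists 3%:R | exists 2%:R
         | exists (-1) | exists (-1) | exists 1 | exists 1].
  all: split; first by rewrite /mults !inE eqxx ?orbT.
  all: split; first by rewrite ?Qm ?Q1 ?Q2 ?Q3 ?Az ?Tz ?T'.
  all: move=> a; rewrite /mults !inE => /or4P[] /eqP ->.
  all: by rewrite ?Qm ?Q1 ?Q2 ?Q3 ?Az ?Tz ?T'. }
apply/eqP/cards1P; exists (a0, x * a0^-1); apply/setP => -[a b]; rewrite in_set in_set1 /=.
rewrite xpair_eqE; apply/idP/idP.
  case/and3P => am bB /eqP ab.
  have a0' := a_neq0 _ am.
  have eb : b = x * a^-1 by apply: (mulfI a0'); rewrite ab mulrCA mulfV // mulr1.
  have ea : a = a0 by apply: un => //; rewrite /Qf -eb.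
  by rewrite eb ea !eqxx.
case/andP => /eqP -> /eqP ->.
rewrite a0m /=; apply/andP; split; first exact: Qa0.
by rewrite mulrCA mulfV ?a_neq0 // mulr1 eqxx.
Qed.
End Suf.
End WithG.

Theorem theorem4p7 (p : nat) (hp : prime p) (hp8 : p %% 8 = 1) :
  (exists B : {set 'F_p}, perfect_B13 B) <->
  (odd (mult_order ((- 3%:R / 2%:R)%R : 'F_p)) /\ (4 %| mult_order ((2%:R)%R : 'F_p))%N).
Proof.
have [g pg] := exists_prim p hp hp8.
split.
  move=> [B hB].
  have [zeta pz] := C_prim_root_exists (expn_gt0 2 (s2 p)).
  exact: (nec p hp hp8 g pg B hB zeta pz).
move=> [oh o2]; exists (Bset p g).
exact: (Bset_perfect p hp hp8 g pg oh o2).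
Qed.
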